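(* Let $\alpha,\beta>-1$ and $n\ge 0$. For $z\in\mathcal{E}_\rho$, i.e. $z=\tfrac12(u+u^{-1})$ with $|u|=\rho\ge 1$, $$P_n^{(\alpha,\beta)}(z)=\sum_{k=-n}^{n} d_{|k|,n}\,u^k,$$ where for $0\le k\le n$ $$d_{k,n}=\frac{(n+\alpha+\beta+1)_k\,(k+\alpha+1)_{n-k}}{(n-k)!\,2^{2k}\,\Gamma(k+1)}\;{}_3F_2\!\left[\begin{matrix}k-n,\ n+k+\alpha+\beta+1,\ k+\tfrac12\\ k+\alpha+1,\ 2k+1\end{matrix};1\right].$$
   Context: $P_n^{(\alpha,\beta)}$ is the Jacobi polynomial $P_n^{(\alpha,\beta)}(x)=2^{-n}\sum_{k=0}^n\binom{n+\alpha}{n-k}\binom{n+\beta}{k}(x-1)^k(x+1)^{n-k}$, $\alpha,\beta>-1$. The Bernstein ellipse is $\mathcal{E}_\rho=\{\tfrac12(u+u^{-1}): u=\rho e^{i\theta},\ 0\le\theta<2\pi\}$, $\rho\ge1$. $(a)_0=1$, $(a)_k=a(a+1)\cdots(a+k-1)$ is the Pochhammer symbol, and ${}_3F_2\left[\begin{matrix}a_1,a_2,a_3\\ b_1,b_2\end{matrix};x\right]=\sum_{j\ge0}\frac{(a_1)_j(a_2)_j(a_3)_j}{(b_1)_j(b_2)_j}\frac{x^j}{j!}$ (a terminating sum here since $k-n\le 0$). *)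

(* Defs.v *)
(* Complex numbers are modelled by an arbitrary
   numClosedFieldType C (the algebraically closed, partially ordered field
   with norm; the complex numbers are the intended instance). *)
From HB Require Import structures.
From mathcomp Require Import all_boot all_order all_algebra.
Set Implicit Arguments. Unset Strict Implicit. Unset Printing Implicit Defensive.
Import Order.TTheory GRing.Theory Num.Theory.
Local Open Scope ring_scope.

Section Defs.
Variable C : numClosedFieldType.

Definition pochhammer (a : C) (k : nat) : C := \prod_(i < k) (a + i%:R).

Definition gbinom (a : C) (m : nat) : C :=
  (\prod_(i < m) (a - i%:R)) / (m`!)%:R.

Definition jacobiP (n : nat) (alpha beta x : C) : C :=
  (2 ^+ n)^-1 * \sum_(k < n.+1)
     gbinom (n%:R + alpha) (n - k) * gbinom (n%:R + beta) k
       * (x - 1) ^+ k * (x + 1) ^+ (n - k).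

(* Generalized hypergeometric 3F2 summed over j = 0..m.  When a1 = -m is a
   non-positive integer this is exactly the (terminating) series, since
   (a1)_j = 0 for j > m. *)
Definition hyp3F2_trunc (m : nat) (a1 a2 a3 b1 b2 x : C) : C :=
  \sum_(j < m.+1)
    pochhammer a1 j * pochhammer a2 j * pochhammer a3 j
      / (pochhammer b1 j * pochhammer b2 j) * x ^+ j / (j`!)%:R.

(* The coefficient d_{k,n}; Gamma(k+1) = k!. *)
Definition dcoef (alpha beta : C) (k n : nat) : C :=
  pochhammer (n%:R + alpha + beta + 1) k * pochhammer (k%:R + alpha + 1) (n - k)
    / ((n - k)`!%:R * 2 ^+ (2 * k) * (k`!)%:R)
  * hyp3F2_trunc (n - k) (k%:R - n%:R) (n%:R + k%:R + alpha + beta + 1)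
        (k%:R + 2^-1) (k%:R + alpha + 1) ((2 * k)%:R + 1) 1.

Definition joukowski (u : C) : C := (u + u^-1) / 2.

End Defs.

(* Main.v *)
Require Import Defs.
From HB Require Import structures.
From mathcomp Require Import all_boot all_order all_algebra.
From mathcomp Require Import ring zify.
Import Order.TTheory GRing.Theory Num.Theory.
Local Open Scope ring_scope.
Set Implicit Arguments. Unset Strict Implicit.

Section H.
Variable C : numClosedFieldType.
Implicit Types (a b c : C).

Definition falling (c : C) (m : nat) : C := \prod_(i < m) (c - i%:R).

Lemma natr_neq0 (m : nat) : (m.+1)%:R != 0 :> C.
Proof. by rewrite pnatr_eq0. Qed.

Lemma fact_neq0 (m : nat) : (m`!)%:R != 0 :> C.
Proof. by rewrite pnatr_eq0 -lt0n fact_gt0. Qed.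

Lemma poch_add a m p : pochhammer a (m + p) = pochhammer a m * pochhammer (a + m%:R) p.
Proof.
rewrite /pochhammer big_split_ord /=; congr (_ * _).
by apply: eq_bigr => i _; rewrite natrD addrA.
Qed.

Lemma poch_recr a m : pochhammer a m.+1 = pochhammer a m * (a + m%:R).
Proof. by rewrite -addn1 poch_add /pochhammer big_ord1 addr0. Qed.



Lemma falling_add c m p : falling c (m + p) = falling c m * falling (c - m%:R) p.
Proof.
rewrite /falling big_split_ord /=; congr (_ * _).
by apply: eq_bigr => i _; rewrite natrD opprD addrA.
Qed.

Lemma falling_recl c m : falling c m.+1 = c * falling (c - 1) m.
Proof. by rewrite -add1n falling_add /falling big_ord1 subr0. Qed.

Lemma falling_recr c m : falling c m.+1 = falling c m * (c - m%:R).
Proof. by rewrite -addn1 falling_add /falling big_ord1 subr0. Qed.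

Lemma gbinomE c m : gbinom c m = falling c m / (m`!)%:R.
Proof. by []. Qed.

Lemma falling_poch c m : falling c m = pochhammer (c - m%:R + 1) m.
Proof.
elim: m c => [|m IH] c; first by rewrite /falling /pochhammer !big_ord0.
rewrite falling_recl IH poch_recr; rewrite mulrC; congr (_ * _).
  by congr pochhammer; rewrite -addn1 natrD; ring.
by rewrite -addn1 natrD; ring.
Qed.

Lemma falling_nat (m i : nat) : falling m%:R i = (m ^_ i)%:R :> C.
Proof.
elim: i m => [|i IH] m; first by rewrite /falling big_ord0.
rewrite falling_recl ffactnS; case: m => [|m]; first by rewrite mul0r mul0n.
by rewrite natrM /= -IH -[m.+1]addn1 natrD addrK.
Qed.

Lemma poch_nat (m i : nat) : pochhammer (m%:R + 1) i * (m`!)%:R = ((m + i)`!)%:R :> C.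
Proof.
elim: i => [|i IH]; first by rewrite /pochhammer big_ord0 mul1r addn0.
rewrite poch_recr mulrAC IH addnS factS natrM mulrC; congr (_ * _).
by rewrite -addn1 !natrD; ring.
Qed.

Lemma poch_neg c i : pochhammer (- c) i = (-1) ^+ i * falling c i.
Proof.
elim: i => [|i IH]; first by rewrite /pochhammer /falling !big_ord0 mulr1.
by rewrite poch_recr falling_recr IH exprS; ring.
Qed.

Lemma gbinom_S c j : (j.+1)%:R * gbinom c j.+1 = (c - j%:R) * gbinom c j.
Proof.
rewrite !gbinomE falling_recr factS natrM.
have h1 := natr_neq0 j; have h2 := fact_neq0 j.
by field; rewrite h2 addrC natr1 h1.
Qed.


Lemma gbinom0 c : gbinom c 0 = 1.
Proof. by rewrite gbinomE /falling big_ord0 fact0 divr1. Qed.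

Lemma vander a b j :
  \sum_(0 <= k < j.+1) gbinom a (j - k) * gbinom b k = gbinom (a + b) j.
Proof.
elim: j => [|j IH]; first by rewrite big_nat1 !gbinom0 mulr1.
apply: (mulfI (natr_neq0 j)); rewrite gbinom_S -IH !mulr_sumr.
transitivity (\sum_(0 <= k < j.+2) ((j.+1 - k)%:R * gbinom a (j.+1 - k)) * gbinom b k
  + \sum_(0 <= k < j.+2) gbinom a (j.+1 - k) * (k%:R * gbinom b k)).
  rewrite -big_split; apply: eq_big_nat => k /andP[_ hk] /=.
  rewrite natrB; last by rewrite -ltnS. ring.
rewrite big_nat_recr // subnn !mul0r /= addr0.
rewrite [X in _ + X = _]big_nat_recl // mul0r mulr0 /= add0r -big_split.
apply: eq_big_nat => k /andP[_ hk] /=.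
rewrite subSS subSn // gbinom_S gbinom_S natrB; last by rewrite -ltnS.
ring.
Qed.

Lemma two_neq0 : (2 : C) != 0.
Proof. by rewrite pnatr_eq0. Qed.

Lemma GB c (n j k : nat) : (k <= j)%N -> (j <= n)%N ->
  gbinom c (n - k) * ('C(n - k, j - k))%:R
  = gbinom c (n - j) * gbinom (c - (n - j)%:R) (j - k).
Proof.
move=> hkj hjn.
have -> : (n - k = (n - j) + (j - k))%N by lia.
set M := (n - j)%N; set P := (j - k)%N.
have hb := congr1 (fun m => m%:R : C) (bin_fact (leq_addl M P)).
rewrite /= addnK !natrM in hb.
have hP := fact_neq0 P; have hM := fact_neq0 M; have hMP := fact_neq0 (M + P).
have -> : ('C(M + P, P)%:R : C) = (M + P)`!%:R / (P`!%:R * M`!%:R).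
  by rewrite -hb; field; rewrite hP hM.
rewrite !gbinomE falling_add.
by field; rewrite hP hM hMP.
Qed.

Lemma VI (a b : C) (n j : nat) : (j <= n)%N ->
  \sum_(0 <= k < j.+1) gbinom (n%:R + a) (n - k) * gbinom (n%:R + b) k * ('C(n - k, j - k))%:R
  = gbinom (n%:R + a) (n - j) * gbinom (n%:R + j%:R + a + b) j.
Proof.
move=> hjn.
transitivity (\sum_(0 <= k < j.+1) gbinom (n%:R + a) (n - j) *
                 (gbinom (j%:R + a) (j - k) * gbinom (n%:R + b) k)).
  apply: eq_big_nat => k /andP[_ hk].
  rewrite mulrAC GB // ?natrB // -?ltnS //.
  have -> : n%:R + a - (n%:R - j%:R) = j%:R + a by ring.
  ring.
rewrite -mulr_sumr vander; congr (_ * gbinom _ _); ring.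
Qed.

Lemma TR (F : nat -> nat -> C) N :
  \sum_(0 <= k < N.+1) \sum_(0 <= i < (N - k).+1) F k i
  = \sum_(0 <= j < N.+1) \sum_(0 <= k < j.+1) F k (j - k)%N.
Proof.
elim: N => [|N IH]; first by rewrite !big_nat1.
rewrite big_nat_recr //= subnn big_nat1.
rewrite (@big_nat_recr _ _ _ N.+1) //=.
transitivity (\sum_(0 <= k < N.+1) (\sum_(0 <= i < (N - k).+1) F k i + F k (N.+1 - k)%N) + F N.+1 0).
  congr (_ + _); apply: eq_big_nat => k /andP[_ hk].
  rewrite subSn // big_nat_recr //=; congr (_ + _).
rewrite big_split /= IH -addrA; congr (_ + _).
by rewrite [in RHS]big_nat_recr //= subnn.
Qed.

Lemma jacobi_y (a b x : C) (n : nat) :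
  jacobiP n a b x = \sum_(0 <= j < n.+1) (2 ^+ j)^-1 *
     (gbinom (n%:R + a) (n - j) * gbinom (n%:R + j%:R + a + b) j) * (x - 1) ^+ j.
Proof.
rewrite /jacobiP -(big_mkord xpredT (fun k => gbinom (n%:R + a) (n - k) * gbinom (n%:R + b) k * (x - 1) ^+ k * (x + 1) ^+ (n - k))).
set y := x - 1.
have -> : x + 1 = 2 + y by rewrite /y; ring.
transitivity (\sum_(0 <= k < n.+1) \sum_(0 <= i < (n - k).+1)
   ((2 ^+ n)^-1 * (gbinom (n%:R + a) (n - k) * gbinom (n%:R + b) k * ('C(n - k, i))%:R)
     * 2 ^+ (n - k - i) * y ^+ (k + i))).
  rewrite mulr_sumr; apply: eq_big_nat => k _.
  rewrite (exprDn 2 y (n - k)) -(big_mkord xpredT (fun i => 2 ^+ (n - k - i) * y ^+ i *+ 'C(n - k, i))) !mulr_sumr; apply: eq_big_nat => i _.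
  rewrite -mulr_natr exprD; ring.
rewrite TR; apply: eq_big_nat => j /andP[_ hj].
transitivity ((2 ^+ n)^-1 * 2 ^+ (n - j) * y ^+ j *
  \sum_(0 <= k < j.+1) gbinom (n%:R + a) (n - k) * gbinom (n%:R + b) k * ('C(n - k, j - k))%:R).
  rewrite mulr_sumr; apply: eq_big_nat => k /andP[_ hk].
  have -> : (k + (j - k) = j)%N by lia.
  have -> : (n - k - (j - k) = n - j)%N by lia.
  ring.
rewrite VI; last by rewrite -ltnS.
have e : (2 : C) ^+ n = 2 ^+ j * 2 ^+ (n - j) by rewrite -exprD subnKC // -ltnS.
rewrite e.
have h1 : (2 : C) ^+ j != 0 by rewrite expf_neq0 // two_neq0.
have h2 : (2 : C) ^+ (n - j) != 0 by rewrite expf_neq0 // two_neq0.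
by field; rewrite h1 h2.
Qed.

Definition T (n j i : nat) : C :=
  if (n - j <= i)%N then (-1) ^+ (i - (n - j)) * ('C(2 * j, i - (n - j)))%:R else 0.

Lemma sign2 (j i : nat) : (i <= 2 * j)%N -> (-1) ^+ (2 * j - i) = (-1) ^+ i :> C.
Proof.
move=> h; rewrite -signr_odd oddB // oddM /= signr_odd //.
Qed.

Lemma EX (u : C) (n j : nat) : (j <= n)%N ->
  u ^+ (n - j) * (u - 1) ^+ (2 * j) = \sum_(0 <= i < (2 * n).+1) T n j i * u ^+ i.
Proof.
move=> hjn.
rewrite (_ : u - 1 = -1 + u); last by ring.
rewrite (exprDn (-1) u (2 * j)).
rewrite -(big_mkord xpredT (fun i => (-1) ^+ (2 * j - i) * u ^+ i *+ 'C(2 * j, i))).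
rewrite [in RHS](@big_cat_nat _ _ _ (n - j)) //=; last by lia.
rewrite [X in _ + X](@big_cat_nat _ _ _ (n + j).+1 (n - j)) //=; [|lia|lia].
have z1 : \sum_(0 <= i < n - j) T n j i * u ^+ i = 0.
  rewrite big_nat_cond big1 // => i /andP[/andP[_ hi] _].
  by rewrite /T leqNgt hi mul0r.
have z3 : \sum_((n + j).+1 <= i < (2 * n).+1) T n j i * u ^+ i = 0.
  rewrite big_nat_cond big1 // => i /andP[/andP[hi _] _].
  rewrite /T ifT; last by lia.
  by rewrite bin_small ?mulr0 ?mul0r //; lia.
rewrite z1 z3 add0r addr0.
rewrite (big_addn 0 _ (n - j)%N).
have -> : ((n + j).+1 - (n - j) = (2 * j).+1)%N by lia.
rewrite mulr_sumr; apply: eq_big_nat => i /andP[_ hi].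
rewrite /T ifT; last by lia.
have -> : (i + (n - j) - (n - j) = i)%N by lia.
rewrite sign2; last by lia.
rewrite exprD -mulr_natr; ring.
Qed.

Definition U (j k : nat) : C :=
  if (k <= j)%N then (-1) ^+ (j - k) * ('C(2 * j, j - k))%:R else 0.

Lemma Tcase1 (n k j : nat) : (j <= n)%N -> T n j (n + k) = U j k.
Proof.
move=> hjn; rewrite /T /U ifT; last by lia.
have -> : (n + k - (n - j) = j + k)%N by lia.
case: (leqP k j) => h.
  have -> : (j + k = 2 * j - (j - k))%N by lia.
  rewrite bin_sub; last by lia.
  rewrite -signr_odd -[in RHS]signr_odd oddB; last by lia.
  by rewrite oddB ?oddM //= ?oddD; lia.
by rewrite bin_small ?mulr0 //; lia.
Qed.

Lemma Tcase2 (n k j : nat) : (j <= n)%N -> (k <= n)%N -> T n j (n - k) = U j k.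
Proof.
move=> hjn hkn; rewrite /T /U.
case: (leqP k j) => h.
  rewrite ifT; last by lia.
  by have -> : (n - k - (n - j) = j - k)%N by lia.
by rewrite ifF //; apply/negbTE; rewrite -ltnNge; lia.
Qed.

Lemma poch0 a : pochhammer a 0 = 1.
Proof. by rewrite /pochhammer big_ord0. Qed.

Lemma Hfact (k i : nat) : ((2 * k + 2 * i)`!)%:R =
  (2 * k)`!%:R * 2 ^+ (2 * i) * pochhammer (k%:R + 1) i * pochhammer (k%:R + 2^-1) i :> C.
Proof.
elim: i => [|i IH]; first by rewrite muln0 addn0 !poch0 !mulr1.
have -> : (2 * k + 2 * i.+1 = (2 * k + 2 * i).+2)%N by lia.
rewrite !factS !natrM IH !poch_recr.
have -> : (2 * i.+1 = (2 * i).+2)%N by lia.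
rewrite !exprS.
have h2 := two_neq0.
have e1 : ((2 * k + 2 * i).+2)%:R = 2 * k%:R + 2 * i%:R + 2 :> C.
  by rewrite -[(_ + _).+2]addn2 !natrD; ring.
have e2 : ((2 * k + 2 * i).+1)%:R = 2 * k%:R + 2 * i%:R + 1 :> C.
  by rewrite -[(_ + _).+1]addn1 !natrD; ring.
rewrite e1 e2.
by field.
Qed.

Lemma poch_neq0 a i : 0 < a -> pochhammer a i != 0.
Proof.
move=> ha; apply/prodf_neq0 => l _; apply: lt0r_neq0.
by apply: ltr_wpDr => //; rewrite ler0n.
Qed.

Lemma poch_nat_neq0 (m i : nat) : pochhammer (m%:R + 1) i != 0 :> C.
Proof.
apply/negP => /eqP h; have := poch_nat m i; rewrite h mul0r => /esym/eqP.
by rewrite (negbTE (fact_neq0 _)).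
Qed.

Definition cj (a b : C) (n j : nat) : C :=
  (2 ^+ j)^-1 * (gbinom (n%:R + a) (n - j) * gbinom (n%:R + j%:R + a + b) j) * (2 ^+ j)^-1.

Lemma TI (a b : C) (n k i : nat) : -1 < a -> (k + i <= n)%N ->
  cj a b n (k + i) * U (k + i) k =
  pochhammer (n%:R + a + b + 1) k * pochhammer (k%:R + a + 1) (n - k)
    / ((n - k)`!%:R * 2 ^+ (2 * k) * (k`!)%:R)
  * (pochhammer (k%:R - n%:R) i * pochhammer (n%:R + k%:R + a + b + 1) i * pochhammer (k%:R + 2^-1) i
     / (pochhammer (k%:R + a + 1) i * pochhammer ((2 * k)%:R + 1) i) * 1 ^+ i / (i`!)%:R).
Proof.
move=> ha hki.
have ha1 : 0 < a + 1 by move: ha; rewrite -subr_gt0 opprK.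
rewrite /cj /U ifT ?leq_addr // (_ : (k + i - k = i)%N); last by lia.
rewrite !gbinomE !falling_poch.
have -> : n%:R + a - (n - (k + i))%:R + 1 = k%:R + a + 1 + i%:R.
  by rewrite natrB // natrD; ring.
have -> : n%:R + (k + i)%:R + a + b - (k + i)%:R + 1 = n%:R + a + b + 1 by ring.
rewrite poch_add.
have -> : (n - k = i + (n - k - i))%N by lia.
rewrite poch_add.
have -> : (n - (k + i) = n - k - i)%N by lia.
have -> : k%:R - n%:R = - ((n - k)%:R) :> C.
  by rewrite natrB; [ring | lia].
rewrite poch_neg falling_nat.
have -> : n%:R + a + b + 1 + k%:R = n%:R + k%:R + a + b + 1 by ring.
set P1 := pochhammer (n%:R + a + b + 1) k.
set P2 := pochhammer (n%:R + k%:R + a + b + 1) i.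
set P3 := pochhammer (k%:R + a + 1) i.
set P4 := pochhammer (k%:R + a + 1 + i%:R) (n - k - i).
set H := pochhammer (k%:R + 2^-1) i.
have hP3 : P3 != 0.
  apply: poch_neq0; rewrite -addrA addrC; apply: ltr_wpDr => //; by rewrite ler0n.
have f1 : ((i + (n - k - i))`!)%:R = ((i + (n - k - i)) ^_ i)%:R * ((n - k - i)`!)%:R :> C.
  rewrite -natrM -{1}(ffact_fact (leq_addr (n - k - i) i)); congr ((_ * _`!)%:R); lia.
have f2 : ((k + i)`!)%:R = pochhammer (k%:R + 1) i * (k`!)%:R :> C by rewrite poch_nat.
have f4 : ((2 * k + i)`!)%:R = pochhammer ((2 * k)%:R + 1) i * ((2 * k)`!)%:R :> C
  by rewrite poch_nat.
have f3 : ('C(2 * (k + i), i))%:R = ((2 * k + 2 * i)`!)%:R / ((i`!)%:R * ((2 * k + i)`!)%:R) :> C.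
  have hle : (i <= 2 * (k + i))%N by lia.
  have hb := bin_fact hle.
  rewrite (_ : (2 * (k + i) - i = 2 * k + i)%N) in hb; last by lia.
  have -> : (2 * k + 2 * i = 2 * (k + i))%N by lia.
  rewrite -hb !natrM.
  have := fact_neq0 i; have := fact_neq0 (2 * k + i).
  by move=> h1 h2; field; rewrite h1 h2.
rewrite f3 Hfact f1 f4 f2.
have hW := poch_nat_neq0 (2 * k) i.
have hR := poch_nat_neq0 k i.
have hF1 := fact_neq0 (n - k - i).
have hFF : ((i + (n - k - i)) ^_ i)%:R != 0 :> C.
  apply/negP => /eqP h; have := fact_neq0 (i + (n - k - i)).
  by rewrite f1 h mul0r eqxx.
have hk := fact_neq0 k; have hi := fact_neq0 i; have h2k := fact_neq0 (2 * k).
have h2 := two_neq0.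
rewrite (_ : (2 : C) ^+ (2 * k) = 2 ^+ k * 2 ^+ k); last by rewrite mul2n -addnn exprD.
rewrite (_ : (2 : C) ^+ (2 * i) = 2 ^+ i * 2 ^+ i); last by rewrite mul2n -addnn exprD.
rewrite exprD expr1n.
have h2k' : (2 : C) ^+ k != 0 by rewrite expf_neq0.
have h2i : (2 : C) ^+ i != 0 by rewrite expf_neq0.
rewrite (_ : ((n - k) ^_ i = (i + (n - k - i)) ^_ i)%N); last by congr (_ ^_ _); lia.
set R := pochhammer (k%:R + 1) i.
set W := pochhammer ((2 * k)%:R + 1) i.
set FF := ((i + (n - k - i)) ^_ i)%:R.
set F1 := (n - k - i)`!%:R.
set Fk := k`!%:R.
set Fi := i`!%:R.
set F2k := (2 * k)`!%:R.
rewrite -/H.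
by field; rewrite hi hW hP3 hk h2k' hF1 hFF h2k h2i hR.
Qed.

Lemma D (a b : C) (n k : nat) : -1 < a -> (k <= n)%N ->
  \sum_(0 <= j < n.+1) cj a b n j * U j k = dcoef a b k n.
Proof.
move=> ha hkn.
rewrite (@big_cat_nat _ _ _ k) //=; last by lia.
rewrite big_nat_cond big1 ?add0r; last first.
  move=> j /andP[/andP[_ hj] _]; rewrite /U ifF ?mulr0 //.
  by apply/negbTE; rewrite -ltnNge.
rewrite (big_addn 0 _ k).
have -> : (n.+1 - k = (n - k).+1)%N by lia.
rewrite /dcoef /hyp3F2_trunc.
rewrite -(big_mkord xpredT (fun i => pochhammer (k%:R - n%:R) i * pochhammer (n%:R + k%:R + a + b + 1) i
   * pochhammer (k%:R + 2^-1) i / (pochhammer (k%:R + a + 1) i * pochhammer ((2 * k)%:R + 1) i)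
   * 1 ^+ i / (i`!)%:R)).
rewrite mulr_sumr; apply: eq_big_nat => i /andP[_ hi].
by rewrite addnC TI //; lia.
Qed.

End H.

Unset Implicit Arguments. Set Strict Implicit.
Theorem theorem3p1 (C : numClosedFieldType) (alpha beta : C)
  (halpha : -1 < alpha) (hbeta : -1 < beta) (n : nat)
  (rho : C) (hrho : 1 <= rho) (u : C) (hu : `|u| = rho) :
  jacobiP n alpha beta (joukowski u) =
  \sum_(i < (2 * n).+1)
     dcoef alpha beta `|(i%:Z - n%:Z)%R|%N n * u ^ (i%:Z - n%:Z).
Proof.
have u0 : u != 0.
  apply/negP => /eqP u0; move: hrho; rewrite -hu u0 normr0.
  by rewrite ler10.
have un : u ^+ n != 0 by rewrite expf_neq0.
have h2 := two_neq0 C.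
apply: (mulfI un).
rewrite jacobi_y.
have hy : joukowski u - 1 = (u - 1) ^+ 2 / (2 * u).
  by rewrite /joukowski; field.
rewrite hy.
transitivity (\sum_(0 <= j < n.+1) cj alpha beta n j * (u ^+ (n - j) * (u - 1) ^+ (2 * j))).
  rewrite mulr_sumr; apply: eq_big_nat => j /andP[_ hj].
  rewrite /cj [in RHS]exprM expr_div_n exprMn.
  have e : u ^+ n = u ^+ j * u ^+ (n - j) by rewrite -exprD subnKC // -ltnS.
  rewrite e.
  have h2j : (2 : C) ^+ j != 0 by rewrite expf_neq0.
  have huj : u ^+ j != 0 by rewrite expf_neq0.
  rewrite exprMn.
  move: h2j huj; set T2 := (2 : C) ^+ j; set U1 := u ^+ j; set U2 := u ^+ (n - j).
  set X := (u - 1) ^+ j => h2j huj.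
  clearbody T2 U1 U2 X.
  move: (gbinom _ _) (gbinom _ _) => g1 g2.
  by field; rewrite h2j huj.
transitivity (\sum_(0 <= j < n.+1) \sum_(0 <= i < (2 * n).+1) cj alpha beta n j * T C n j i * u ^+ i).
  apply: eq_big_nat => j /andP[_ hj].
  have hj' : (j <= n)%N by rewrite -ltnS.
  rewrite (EX u hj') mulr_sumr.
  by apply: eq_bigr => i _; rewrite mulrA.
rewrite exchange_big_nat.
rewrite -(big_mkord xpredT (fun i => dcoef alpha beta `|(i%:Z - n%:Z)%R|%N n * u ^ (i%:Z - n%:Z))).
rewrite mulr_sumr; apply: eq_big_nat => i /andP[_ hi].
have e : u ^+ n * u ^ (i%:Z - n%:Z) = u ^+ i.
  by rewrite exprnP -expfzDr // addrC subrK exprnP.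
rewrite -mulr_suml mulrCA e; congr (_ * _).
case: (leqP n i) => hni.
  have [k ek] : exists k, i = (n + k)%N by exists (i - n)%N; lia.
  subst i.
  rewrite distnEl ?leq_addr // addKn.
  transitivity (\sum_(0 <= j < n.+1) cj alpha beta n j * U C j k).
    apply: eq_big_nat => j /andP[_ hj].
    have hj' : (j <= n)%N by rewrite -ltnS.
    by rewrite (Tcase1 C k hj').
  have hk : (k <= n)%N by lia.
  by rewrite (D beta halpha hk).
have [k ek] : exists k, i = (n - k)%N /\ (k <= n)%N by exists (n - i)%N; lia.
case: ek => ek hk; subst i.
rewrite distnEr ?leq_subr //.
have -> : (n - (n - k) = k)%N by lia.
transitivity (\sum_(0 <= j < n.+1) cj alpha beta n j * U C j k).
  apply: eq_big_nat => j /andP[_ hj].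
  have hj' : (j <= n)%N by rewrite -ltnS.
  by rewrite (Tcase2 C hj' hk).
by rewrite (D beta halpha hk).
Qed.
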